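(* Let $\mathcal{A}(X)$ be the free transposed Poisson $3$-Lie algebra over $\mathbb{C}$ generated by a countable set $X=\{a_1,a_2,\ldots\}$. Then $\mathcal{A}(X)$ does not satisfy the identity $$S(h,y_1,y_2,x_1,x_2):=y_1[hy_2,x_1,x_2]-y_2[hy_1,x_1,x_2]+hx_1[y_1,y_2,x_2]-hx_2[y_1,y_2,x_1]=0;$$ that is, there exist $h,y_1,y_2,x_1,x_2\in\mathcal{A}(X)$ with $S(h,y_1,y_2,x_1,x_2)\neq 0$. In particular, $\mathcal{A}(X)$ is not a strong transposed Poisson $3$-Lie algebra.
   Context: A $3$-Lie algebra is a vector space with a trilinear skew-symmetric bracket satisfying $[[x_1,x_2,x_3],y_2,y_3]=\sum_{i=1}^3[x_1,\ldots,[x_i,y_2,y_3],\ldots,x_3]$. A transposed Poisson $3$-Lie algebra is a triple $(A,\cdot,[\cdot,\cdot,\cdot])$ with $(A,\cdot)$ commutative associative, $(A,[\cdot,\cdot,\cdot])$ a $3$-Lie algebra, and $3h[a_1,a_2,a_3]=[ha_1,a_2,a_3]+[a_1,ha_2,a_3]+[a_1,a_2,ha_3]$ for all $h,a_i\in A$. These algebras form a variety defined by multilinear identities; $\mathcal{A}(X)$ is the free object in this variety on $X$. A transposed Poisson $3$-Lie algebra is strong if it satisfies $S(h,y_1,y_2,x_1,x_2)=0$ identically. *)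

(* Defs.v *)
From HB Require Import structures.
From mathcomp Require Import all_boot all_order all_algebra.
From mathcomp Require Import complex.
From mathcomp Require Import Rstruct.
Set Implicit Arguments. Unset Strict Implicit. Unset Printing Implicit Defensive.
Import Order.TTheory GRing.Theory Num.Theory.
Local Open Scope ring_scope.

Definition Cplx : fieldType := (Rdefinitions.R)[i].

Record TP3L (F : fieldType) := {
  tp_carrier :> lmodType F;
  tp_mul : tp_carrier -> tp_carrier -> tp_carrier;
  tp_br : tp_carrier -> tp_carrier -> tp_carrier -> tp_carrier;
  tp_mul_linear : forall (a : F) (x y z : tp_carrier),
      tp_mul (a *: x + y) z = a *: tp_mul x z + tp_mul y z;
  tp_mul_comm : forall x y, tp_mul x y = tp_mul y x;
  tp_mul_assoc : forall x y z, tp_mul x (tp_mul y z) = tp_mul (tp_mul x y) z;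
  tp_br_linear : forall (a : F) (x x' y z : tp_carrier),
      tp_br (a *: x + x') y z = a *: tp_br x y z + tp_br x' y z;
  tp_br_skew12 : forall x y z, tp_br x y z = - tp_br y x z;
  tp_br_skew23 : forall x y z, tp_br x y z = - tp_br x z y;
  tp_filippov : forall x1 x2 x3 y2 y3,
      tp_br (tp_br x1 x2 x3) y2 y3 =
        tp_br (tp_br x1 y2 y3) x2 x3 + tp_br x1 (tp_br x2 y2 y3) x3
        + tp_br x1 x2 (tp_br x3 y2 y3);
  tp_compat : forall h a1 a2 a3,
      tp_mul h (tp_br a1 a2 a3) *+ 3 =
        tp_br (tp_mul h a1) a2 a3 + tp_br a1 (tp_mul h a2) a3
        + tp_br a1 a2 (tp_mul h a3)
}.

Definition tp_hom (F : fieldType) (A B : TP3L F) (g : A -> B) : Prop :=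
  (forall (a : F) (x y : A), g (a *: x + y) = a *: g x + g y) /\
  (forall x y : A, g (tp_mul x y) = tp_mul (g x) (g y)) /\
  (forall x y z : A, g (tp_br x y z) = tp_br (g x) (g y) (g z)).

Definition tp_free (F : fieldType) (X : Type) (A : TP3L F) (iota : X -> A)
  : Prop :=
  forall (B : TP3L F) (f : X -> B),
    (exists g : A -> B, tp_hom g /\ forall x, g (iota x) = f x) /\
    (forall g1 g2 : A -> B, tp_hom g1 -> tp_hom g2 ->
       (forall x, g1 (iota x) = g2 (iota x)) -> forall u, g1 u = g2 u).

Definition tp_S (F : fieldType) (A : TP3L F) (h y1 y2 x1 x2 : A) : A :=
  tp_mul y1 (tp_br (tp_mul h y2) x1 x2)
  - tp_mul y2 (tp_br (tp_mul h y1) x1 x2)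
  + tp_mul (tp_mul h x1) (tp_br y1 y2 x2)
  - tp_mul (tp_mul h x2) (tp_br y1 y2 x1).

(* Main.v *)
Require Import Defs.
From mathcomp Require Import all_boot all_order all_algebra.
From mathcomp Require Import complex Rstruct ring.
Set Implicit Arguments. Unset Strict Implicit. Unset Printing Implicit Defensive.
Import Order.TTheory GRing.Theory Num.Theory.
Local Open Scope ring_scope.

Section Model.
Notation V := 'rV[Cplx]_7.

Definition co (x : V) (k : nat) : Cplx := x ord0 (inord k).

Lemma co_ext (x y : V) : (forall k, (k < 7)%N -> co x k = co y k) -> x = y.
Proof.
move=> H; apply/rowP => j; have := H _ (ltn_ord j); by rewrite /co inord_val.
Qed.

Lemma coD (a : Cplx) (x y : V) k : co (a *: x + y) k = a * co x k + co y k.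
Proof. by rewrite /co !mxE. Qed.

Lemma coA (x y : V) k : co (x + y) k = co x k + co y k.
Proof. by rewrite /co !mxE. Qed.
Lemma coN (x : V) k : co (- x) k = - co x k.
Proof. by rewrite /co !mxE. Qed.
Lemma coZ (a : Cplx) (x : V) k : co (a *: x) k = a * co x k.
Proof. by rewrite /co !mxE. Qed.
Lemma coMn (x : V) n k : co (x *+ n) k = co x k *+ n.
Proof. by rewrite /co mulmxnE. Qed.

Definition mulc (x y : V) (i : nat) : Cplx :=
  match i with
  | 2 => co x 0 * co y 0
  | 3 => co x 0 * co y 1 + co x 1 * co y 0
  | 6 => co x 0 * co y 4 + co x 4 * co y 0 + co x 1 * co y 5 + co x 5 * co y 1
  | _ => 0
  end.

Definition D3 (i j k : nat) (x y z : V) : Cplx :=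
  co x i * (co y j * co z k - co y k * co z j)
  - co y i * (co x j * co z k - co x k * co z j)
  + co z i * (co x j * co y k - co x k * co y j).

Definition brc (x y z : V) (i : nat) : Cplx :=
  match i with
  | 4 => D3 3 0 1 x y z
  | 5 => - D3 2 0 1 x y z
  | 6 => - (3%:R * D3 2 3 1 x y z)
  | _ => 0
  end.

Definition mmul (x y : V) : V := \row_(i < 7) mulc x y i.
Definition mbr (x y z : V) : V := \row_(i < 7) brc x y z i.

Lemma co_mul x y k : (k < 7)%N -> co (mmul x y) k = mulc x y k.
Proof. by move=> Hk; rewrite /co /mmul mxE inordK. Qed.
Lemma co_br x y z k : (k < 7)%N -> co (mbr x y z) k = brc x y z k.
Proof. by move=> Hk; rewrite /co /mbr mxE inordK. Qed.

Ltac solve7 :=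
  apply: co_ext; case=> [|[|[|[|[|[|[|?]]]]]]] ? //;
  do 3 (rewrite ?(coA,coN,coZ,coMn,co_mul,co_br) //= /D3 /=); ring.

Lemma m_lin (a : Cplx) (x y z : V) : mmul (a *: x + y) z = a *: mmul x z + mmul y z.
Proof. solve7. Qed.
Lemma m_comm (x y : V) : mmul x y = mmul y x.
Proof. solve7. Qed.
Lemma m_assoc (x y z : V) : mmul x (mmul y z) = mmul (mmul x y) z.
Proof. solve7. Qed.
Lemma b_lin (a : Cplx) (x x' y z : V) : mbr (a *: x + x') y z = a *: mbr x y z + mbr x' y z.
Proof. solve7. Qed.
Lemma b_skew12 (x y z : V) : mbr x y z = - mbr y x z.
Proof. solve7. Qed.
Lemma b_skew23 (x y z : V) : mbr x y z = - mbr x z y.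
Proof. solve7. Qed.
Lemma b_fil x1 x2 x3 y2 y3 : mbr (mbr x1 x2 x3) y2 y3 =
        mbr (mbr x1 y2 y3) x2 x3 + mbr x1 (mbr x2 y2 y3) x3
        + mbr x1 x2 (mbr x3 y2 y3).
Proof. solve7. Qed.
Lemma b_compat h a1 a2 a3 : mmul h (mbr a1 a2 a3) *+ 3 =
        mbr (mmul h a1) a2 a3 + mbr a1 (mmul h a2) a3
        + mbr a1 a2 (mmul h a3).
Proof. solve7. Qed.
End Model.

Definition Bm : TP3L Cplx :=
  @Build_TP3L Cplx 'rV[Cplx]_7 mmul mbr m_lin m_comm m_assoc b_lin b_skew12
    b_skew23 b_fil b_compat.

Definition e0 : 'rV[Cplx]_7 := \row_(i < 7) (if (i : nat) == 0%N then 1 else 0).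
Definition e1 : 'rV[Cplx]_7 := \row_(i < 7) (if (i : nat) == 1%N then 1 else 0).

Lemma co_e0 k : (k < 7)%N -> co e0 k = if k == 0%N then 1 else 0.
Proof. by move=> Hk; rewrite /co /e0 mxE inordK. Qed.
Lemma co_e1 k : (k < 7)%N -> co e1 k = if k == 1%N then 1 else 0.
Proof. by move=> Hk; rewrite /co /e1 mxE inordK. Qed.

Lemma S_model : co (@tp_S _ Bm e0 e0 e1 e0 e1) 6 = 2%:R.
Proof.
rewrite /tp_S /=.
do 4 (rewrite ?(coA,coN,coZ,coMn,co_mul,co_br,co_e0,co_e1) //= /D3 /=).
ring.
Qed.

Lemma two_neq0 : (2%:R : Cplx) != 0.
Proof. by rewrite /Cplx pnatr_eq0. Qed.

Lemma hom_add (F : fieldType) (A B : TP3L F) (g : A -> B) :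
  tp_hom g -> forall x y, g (x + y) = g x + g y.
Proof. by move=> [H _] x y; have := H 1 x y; rewrite !scale1r. Qed.
Lemma hom_sub (F : fieldType) (A B : TP3L F) (g : A -> B) :
  tp_hom g -> forall x y, g (x - y) = g x - g y.
Proof.
move=> [H _] x y; have := H (-1) y x.
by rewrite !scaleN1r addrC => ->; rewrite addrC.
Qed.
Lemma hom_0 (F : fieldType) (A B : TP3L F) (g : A -> B) :
  tp_hom g -> g 0 = 0.
Proof. by move=> Hg; have := hom_sub Hg 0 0; rewrite !subrr. Qed.

Lemma hom_opp (F : fieldType) (A B : TP3L F) (g : A -> B) :
  tp_hom g -> forall x, g (- x) = - g x.
Proof. by move=> Hg x; have := hom_sub Hg 0 x; rewrite !sub0r (hom_0 Hg) sub0r. Qed.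

Theorem mainTheorem8 (A : TP3L Cplx) (iota : nat -> A) :
  tp_free iota ->
  exists h y1 y2 x1 x2 : A, tp_S h y1 y2 x1 x2 <> 0.
Proof.
move=> Hfree.
have [[g [Hg Hgi]] _] := Hfree Bm (fun n => if n == 0%N then e0 else e1).
exists (iota 0%N), (iota 0%N), (iota 1%N), (iota 0%N), (iota 1%N) => HS.
have := congr1 g HS; rewrite (hom_0 Hg).
have [_ [Hm Hb]] := Hg.
rewrite /tp_S !(hom_add Hg, hom_opp Hg) !Hm !Hb !Hm !Hgi /= => H.
have := S_model; rewrite /tp_S /= H /co mxE => /esym/eqP.
by rewrite (negbTE two_neq0).
Qed.
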